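(* For $k=1,2$ let $\mathcal{N}_k:\mathcal{L}(\mathcal{H}_{A_k})\to\mathcal{L}(\mathcal{H}_{B_k})$ be a quantum channel with $\dim\mathcal{H}_{A_k}=\dim\mathcal{H}_{B_k}=d_k$. For a channel $\mathcal{N}:\mathcal{L}(\mathcal{H}_A)\to\mathcal{L}(\mathcal{H}_B)$ with $\dim\mathcal{H}_A=\dim\mathcal{H}_B=d$, define $$\mathcal{O}(\mathcal{N})=\max_{\rho_{RA}}F\big((\mathcal{I}_R\otimes\mathcal{N})(\rho_{RA}),\phi_{RB}\big),$$ where $\mathcal{H}_R$ is a $d$-dimensional reference space, the maximum is over all density operators $\rho_{RA}$ on $\mathcal{H}_R\otimes\mathcal{H}_A$, $\phi_{RB}$ is the projector onto the maximally entangled state $\frac1{\sqrt d}\sum_j|j\rangle_R|j\rangle_B$ (fixed orthonormal bases), and $F(\rho,\sigma)=\|\sqrt\rho\sqrt\sigma\|_1$. Then, with $\mathcal{N}_1\otimes\mathcal{N}_2:\mathcal{L}(\mathcal{H}_{A_1}\otimes\mathcal{H}_{A_2})\to\mathcal{L}(\mathcal{H}_{B_1}\otimes\mathcal{H}_{B_2})$ (of input/output dimension $d_1d_2$), $$\mathcal{O}(\mathcal{N}_1\otimes\mathcal{N}_2)=\mathcal{O}(\mathcal{N}_1)\,\mathcal{O}(\mathcal{N}_2).$$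
   Context: $\mathcal{I}_R$ is the identity map on $\mathcal{L}(\mathcal{H}_R)$ and $\|\cdot\|_1$ is the trace norm. For the tensor product channel the reference space is $\mathcal{H}_{R_1}\otimes\mathcal{H}_{R_2}$ and the maximally entangled state is the one across $R_1R_2$ and $B_1B_2$. *)

(* Defs.v *)
From HB Require Import structures.
From mathcomp Require Import all_boot all_order all_algebra.
From mathcomp Require Import complex mxtens.
From mathcomp Require Import boolp classical_sets reals.
Set Implicit Arguments. Unset Strict Implicit. Unset Printing Implicit Defensive.
Import Order.TTheory GRing.Theory Num.Theory.
Local Open Scope ring_scope.

Section QDefs.
Variable R : realType.
Local Notation C := (R[i]).

Definition adjmx {m n} (A : 'M[C]_(m, n)) : 'M[C]_(n, m) := map_mx Num.conj A^T.

Definition hermitian {n} (A : 'M[C]_n) : Prop := adjmx A = A.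

Definition psd {n} (A : 'M[C]_n) : Prop :=
  hermitian A /\ forall v : 'cV[C]_n, 0 <= (adjmx v *m A *m v) 0 0.

Definition density {n} (rho : 'M[C]_n) : Prop := psd rho /\ \tr rho = 1.

Definition sqrtm {n} (A : 'M[C]_n) : 'M[C]_n :=
  xget 0 [set B | psd B /\ B *m B = A].

Definition trnorm {n} (X : 'M[C]_n) : R := complex.Re (\tr (sqrtm (adjmx X *m X))).

Definition fidelity {n} (rho sigma : 'M[C]_n) : R := trnorm (sqrtm rho *m sqrtm sigma).

(* tensor product f (x) g of linear maps on matrices, defined by linear extension
   on matrix units: (f (x) g)(X) = sum X_{(i,k),(j,l)} f(E_ij) (x) g(E_kl) *)
Definition tens_map {m1 n1 m2 n2}
  (f : 'M[C]_m1 -> 'M[C]_n1) (g : 'M[C]_m2 -> 'M[C]_n2) (X : 'M[C]_(m1 * m2))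
  : 'M[C]_(n1 * n2) :=
  \sum_(i < m1) \sum_(j < m1) \sum_(k < m2) \sum_(l < m2)
     X (mxtens_index (i, k)) (mxtens_index (j, l)) *:
       (f (delta_mx i j) *t g (delta_mx k l)).

Definition completely_positive {m n} (f : 'M[C]_m -> 'M[C]_n) : Prop :=
  forall (k : nat) (X : 'M[C]_(k * m)), psd X -> psd (tens_map (@id 'M[C]_k) f X).

Definition trace_preserving {m n} (f : 'M[C]_m -> 'M[C]_n) : Prop :=
  forall X, \tr (f X) = \tr X.

Definition channel {m n} (f : 'M[C]_m -> 'M[C]_n) : Prop :=
  linear f /\ completely_positive f /\ trace_preserving f.

(* maximally entangled vector (1/sqrt d) sum_j |j>_R |j>_B, written as
   unnormalised vector; phi_me d is the projector onto the normalised state *)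
Definition me_vec (d : nat) : 'cV[C]_(d * d) :=
  \col_x (\sum_(j < d) ((x == mxtens_index (j, j)) %:R : C)).

Definition phi_me (d : nat) : 'M[C]_(d * d) :=
  (d%:R)^-1 *: (me_vec d *m adjmx (me_vec d)).

Definition Oval (d : nat) (N : 'M[C]_d -> 'M[C]_d) : R :=
  sup [set r : R | exists rho : 'M[C]_(d * d),
         density rho /\ r = fidelity (tens_map (@id 'M[C]_d) N rho) (phi_me d)].

End QDefs.

(* Main.v *)
Require Import Defs.
From HB Require Import structures.
From mathcomp Require Import all_boot all_order all_algebra.
From mathcomp Require Import complex mxtens.
From mathcomp Require Import boolp classical_sets reals.
From mathcomp Require Import spectral sesquilinear.
From mathcomp Require Import ring.
Import Order.TTheory GRing.Theory Num.Theory Num.Def.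
Local Open Scope ring_scope.
Set Implicit Arguments. Unset Strict Implicit. Unset Printing Implicit Defensive.

Section Q.
Variable R : realType.
Local Notation C := (R[i]).

Lemma adjmxE m n (A : 'M[C]_(m,n)) i j : adjmx A i j = (A j i)^*.
Proof. by rewrite !mxE. Qed.

Lemma adjmxK m n (A : 'M[C]_(m,n)) : adjmx (adjmx A) = A.
Proof. by apply/matrixP=> i j; rewrite !mxE conjCK. Qed.

Lemma adjmxM m n p (A : 'M[C]_(m,n)) (B : 'M[C]_(n,p)) :
  adjmx (A *m B) = adjmx B *m adjmx A.
Proof. by rewrite /adjmx trmx_mul map_mxM. Qed.

Lemma adjmxD m n (A B : 'M[C]_(m,n)) : adjmx (A + B) = adjmx A + adjmx B.
Proof. by apply/matrixP=> i j; rewrite !mxE rmorphD. Qed.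

Lemma adjmxN m n (A : 'M[C]_(m,n)) : adjmx (- A) = - adjmx A.
Proof. by apply/matrixP=> i j; rewrite !mxE rmorphN. Qed.

Lemma adjmxB m n (A B : 'M[C]_(m,n)) : adjmx (A - B) = adjmx A - adjmx B.
Proof. by rewrite adjmxD adjmxN. Qed.

Lemma adjmxZ m n (a : C) (A : 'M[C]_(m,n)) : adjmx (a *: A) = a^* *: adjmx A.
Proof. by apply/matrixP=> i j; rewrite !mxE rmorphM. Qed.

Lemma adjmx_diag n (d : 'rV[C]_n) : adjmx (diag_mx d) = diag_mx (map_mx Num.conj d).
Proof.
apply/matrixP=> i j; rewrite !mxE eq_sym.
by case: (eqVneq i j) => [->|_]; rewrite ?mulr1n ?mulr0n ?conjC0.
Qed.

Lemma adj_mul_eq0 m n (X : 'M[C]_(m,n)) : adjmx X *m X = 0 -> X = 0.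
Proof.
move=> H; apply/matrixP=> i j; rewrite mxE.
have /matrixP/(_ j j) := H; rewrite !mxE => Hs.
have H0 : forall k, predT k -> 0 <= adjmx X j k * X k j.
  by move=> k _; rewrite !mxE mulrC; exact: mul_conjC_ge0.
have := @psumr_eq0P _ _ predT (fun k => adjmx X j k * X k j) H0 Hs i isT.
rewrite !mxE mulrC => /eqP.
by rewrite mul_conjC_eq0 => /eqP.
Qed.

Lemma quad_ge0 n (v : 'cV[C]_n) : 0 <= (adjmx v *m v) 0 0.
Proof.
rewrite mxE; apply: sumr_ge0 => k _; rewrite !mxE mulrC; exact: mul_conjC_ge0.
Qed.


Lemma quad_col n (A W : 'M[C]_n) i :
  (adjmx (col i W) *m A *m col i W) 0 0 = (adjmx W *m A *m W) i i.
Proof.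
rewrite !mxE; apply: eq_bigr => k _; rewrite !mxE; congr (_ * _).
by apply: eq_bigr => l _; rewrite !mxE.
Qed.

Lemma unit_sym n (W : 'M[C]_n) : adjmx W *m W = 1%:M -> W *m adjmx W = 1%:M.
Proof. exact: mulmx1C. Qed.

Lemma psd_decomp n (A : 'M[C]_n) : psd A ->
  exists (W : 'M[C]_n) (d : 'rV[C]_n), [/\ adjmx W *m W = 1%:M, W *m adjmx W = 1%:M,
     A = W *m diag_mx d *m adjmx W & forall i, 0 <= d 0 i].
Proof.
case=> hA qA.
have nA : A \is normalmx.
  apply/normalmxP; have -> : map_mx conjC A^T = A := hA; done.
have [[P D] /= Pu AE] := elimT (@orthomx_spectral_subproof _ n A) nA.
rewrite invmx_unitary // in AE.
have PP : P *m adjmx P = 1%:M := unitarymxP Pu.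
have PP' : adjmx P *m P = 1%:M := mulmx1C PP.
exists (adjmx P), D; split; rewrite ?adjmxK //.
move=> i; have := qA (col i (adjmx P)); rewrite quad_col adjmxK.
have -> : P *m A *m adjmx P = diag_mx D.
  rewrite AE.
  have -> : map_mx conjC P^T = adjmx P by [].
  by rewrite !mulmxA PP mul1mx -mulmxA PP mulmx1.
by rewrite mxE eqxx mulr1n.
Qed.


Lemma diag_quad n (d : 'rV[C]_n) (u : 'cV[C]_n) : (forall i, 0 <= d 0 i) ->
  0 <= (adjmx u *m diag_mx d *m u) 0 0.
Proof.
move=> hd; rewrite mul_mx_diag mxE; apply: sumr_ge0 => k _; rewrite !mxE.
rewrite mulrAC; apply: mulr_ge0 => //; rewrite mulrC; exact: mul_conjC_ge0.
Qed.

Lemma psd_conj n (W : 'M[C]_n) (d : 'rV[C]_n) : (forall i, 0 <= d 0 i) ->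
  psd (W *m diag_mx d *m adjmx W).
Proof.
move=> hd; split.
  rewrite /Defs.hermitian !adjmxM adjmxK adjmx_diag mulmxA; congr (_ *m diag_mx _ *m _).
  by apply/matrixP=> i j; rewrite mxE (ord1 i) geC0_conj.
move=> v.
have -> : adjmx v *m (W *m diag_mx d *m adjmx W) *m v =
   adjmx (adjmx W *m v) *m diag_mx d *m (adjmx W *m v).
  by rewrite adjmxM adjmxK !mulmxA.
exact: diag_quad.
Qed.

Lemma sqrtm_spec n (A : 'M[C]_n) : psd A -> psd (sqrtm A) /\ sqrtm A *m sqrtm A = A.
Proof.
move=> pA; have [W [d [h1 h2 AE hd]]] := psd_decomp pA.
apply: (@xgetPex _ 0 [set B | psd B /\ B *m B = A]).
exists (W *m diag_mx (map_mx sqrtC d) *m adjmx W); split.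
  by apply: psd_conj => i; rewrite mxE sqrtC_ge0.
rewrite AE !mulmxA -(mulmxA _ (adjmx W) W) h1 mulmx1 -(mulmxA W) mulmx_diag.
congr (_ *m diag_mx _ *m _).
by apply/matrixP => i j; rewrite !mxE (ord1 i) -expr2 sqrtCK.
Qed.


Lemma sandwich n (u : 'cV[C]_n) (M : 'M[C]_n) :
  u *m adjmx u *m (M *m (u *m adjmx u)) = (adjmx u *m M *m u) 0 0 *: (u *m adjmx u).
Proof.
have -> : u *m adjmx u *m (M *m (u *m adjmx u)) = u *m (adjmx u *m M *m u) *m adjmx u.
  by rewrite !mulmxA.
by rewrite {1}(mx11_scalar (adjmx u *m M *m u)) mul_mx_scalar scalemxAl.
Qed.

Lemma sqrtm_rank1 n (u : 'cV[C]_n) (r : C) : adjmx u *m u = 1%:M -> 0 <= r ->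
  sqrtm (r *: (u *m adjmx u)) = sqrtC r *: (u *m adjmx u).
Proof.
move=> hu hr; set P := u *m adjmx u.
have PP : P *m P = P by rewrite /P mulmxA -(mulmxA u) hu mulmx1.
have hP : adjmx P = P by rewrite /P adjmxM adjmxK.
have P0 : P != 0.
  apply/eqP => P0.
  have : adjmx u *m P *m u = 1%:M by rewrite /P mulmxA hu mul1mx hu.
  rewrite P0 mulmx0 mul0mx => /matrixP/(_ 0 0); rewrite !mxE => /esym/eqP.
  by rewrite oner_eq0.
apply: xget_unique.
  split.
    split.
      by rewrite /Defs.hermitian adjmxZ hP geC0_conj // sqrtC_ge0.
    move=> v; rewrite -scalemxAr -scalemxAl mxE; apply: mulr_ge0; first by rewrite sqrtC_ge0.
    have -> : adjmx v *m P *m v = adjmx (adjmx u *m v) *m (adjmx u *m v).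
      by rewrite adjmxM adjmxK /P !mulmxA.
    exact: quad_ge0.
  by rewrite -scalemxAl -scalemxAr PP scalerA -expr2 sqrtCK.
move=> B [[hB qB] BB].
case: (eqVneq r 0) => [r0|rn0].
  rewrite r0 sqrtC0 scale0r; apply: adj_mul_eq0.
  by rewrite hB BB r0 scale0r.
have comm : B *m P = P *m B.
  have : B *m (B *m B) = (B *m B) *m B by rewrite mulmxA.
  by rewrite BB -scalemxAr -scalemxAl => /(scalerI rn0).
have BP : B = B *m P.
  apply/eqP; rewrite -subr_eq0; apply/eqP; apply: adj_mul_eq0.
  have e1 : B *m (B *m P) = r *: P by rewrite mulmxA BB -scalemxAl PP.
  have e2 : B *m P *m B = r *: P by rewrite -mulmxA -comm e1.
  have e3 : B *m P *m (B *m P) = r *: P by rewrite mulmxA e2 -scalemxAl PP.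
  rewrite adjmxB adjmxM hB hP -comm mulmxBl !mulmxBr BB e1 e2 e3.
  by rewrite !subrr.
have BPB : B = P *m B *m P by rewrite -comm -mulmxA PP -BP.
have hl : 0 <= (adjmx u *m B *m u) 0 0 := qB u.
have BL : B = (adjmx u *m B *m u) 0 0 *: P.
  by rewrite -sandwich -/P mulmxA -BPB.
set l := (adjmx u *m B *m u) 0 0 in hl BL.
have : B *m B = (l ^+ 2) *: P.
  by rewrite BL -scalemxAl -scalemxAr PP scalerA expr2.
rewrite BB => /eqP; rewrite -subr_eq0 -scalerBl scaler_eq0 (negPf P0) orbF subr_eq0.
by move=> /eqP ->; rewrite sqrCK.
Qed.

Lemma fid_pure n (s : 'M[C]_n) (u : 'cV[C]_n) : psd s -> adjmx u *m u = 1%:M ->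
  fidelity s (u *m adjmx u) = complex.Re (sqrtC ((adjmx u *m s *m u) 0 0)).
Proof.
move=> ps hu; set P := u *m adjmx u.
have hP : adjmx P = P by rewrite /P adjmxM adjmxK.
have [[hS qS] SS] := sqrtm_spec ps.
have sP : sqrtm P = P.
  by have := sqrtm_rank1 hu ler01; rewrite sqrtC1 !scale1r.
rewrite /fidelity /trnorm sP.
have -> : adjmx (sqrtm s *m P) *m (sqrtm s *m P) = (adjmx u *m s *m u) 0 0 *: P.
  by rewrite adjmxM hS hP -mulmxA (mulmxA (sqrtm s)) SS sandwich.
rewrite sqrtm_rank1 //; last by have := ps.2 u.
rewrite mxtraceZ /P mxtrace_mulC hu mxtrace1 mulr1.
done.
Qed.

End Q.

Section Q2.
Variable R : realType.
Local Notation C := (R[i]).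

Lemma sum_delta n (F : 'I_n -> C) a : \sum_i ((a == i)%:R * F i) = F a.
Proof.
rewrite (bigD1 a) //= eqxx mul1r big1 ?addr0 // => i /negPf.
by rewrite eq_sym => ->; rewrite mul0r.
Qed.

Lemma sum_deltar n (F : 'I_n -> C) a : \sum_i ((i == a)%:R * F i) = F a.
Proof. by under eq_bigr do rewrite eq_sym; rewrite sum_delta. Qed.

Lemma sum_delta_nat n (a : 'I_n) : \sum_i ((a == i)%:R : C) = 1.
Proof.
transitivity (\sum_i ((a == i)%:R * (1 : C))); first by apply: eq_bigr => i _; rewrite mulr1.
exact: (sum_delta (fun _ => 1)).
Qed.

Lemma sum_pair m n (F : 'I_(m * n) -> C) :
  \sum_x F x = \sum_(i < m) \sum_(j < n) F (mxtens_index (i, j)).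
Proof.
rewrite pair_big /=.
rewrite (reindex (@mxtens_index m n)) /=; last first.
  by exists (@mxtens_unindex m n) => x _; rewrite (mxtens_indexK, mxtens_unindexK).
by apply: eq_bigr => -[i j].
Qed.

Lemma me_vecE d x : me_vec R d x 0 = \sum_(j < d) ((x == mxtens_index (j, j))%:R : C).
Proof. by rewrite mxE. Qed.

Lemma me_sumr d (F : 'I_(d * d) -> C) :
  \sum_x F x * me_vec R d x 0 = \sum_j F (mxtens_index (j, j)).
Proof.
under eq_bigr do rewrite me_vecE mulr_sumr.
rewrite exchange_big /=; apply: eq_bigr => j _.
by under eq_bigr do rewrite mulrC; rewrite sum_deltar.
Qed.

Lemma me_conj d x : (me_vec R d x 0)^* = me_vec R d x 0.
Proof. by rewrite me_vecE rmorph_sum; apply: eq_bigr => j _; rewrite rmorph_nat. Qed.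

Lemma me_quad d (s : 'M[C]_(d * d)) :
  (adjmx (me_vec R d) *m s *m me_vec R d) 0 0 =
  \sum_a \sum_b s (mxtens_index (a, a)) (mxtens_index (b, b)).
Proof.
rewrite mxE me_sumr [RHS]exchange_big /=; apply: eq_bigr => b _; rewrite mxE.
transitivity (\sum_j s j (mxtens_index (b, b)) * me_vec R d j 0).
  by apply: eq_bigr => j _; rewrite (adjmxE (me_vec R d)) me_conj mulrC.
by rewrite me_sumr.
Qed.

Lemma me_norm d : (adjmx (me_vec R d) *m me_vec R d) 0 0 = d%:R.
Proof.
have := me_quad (1%:M : 'M[C]_(d * d)); rewrite mulmx1 => ->.
under eq_bigr => a _ do under eq_bigr => b _ do
  rewrite mxE (can_eq (@mxtens_indexK _ _)) xpair_eqE andbb.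
under eq_bigr => a _ do rewrite sum_delta_nat.
by rewrite sumr_const card_ord.
Qed.

End Q2.

Section Q3.
Variable R : realType.
Local Notation C := (R[i]).

Lemma tens_mapE m1 n1 m2 n2 (f : 'M[C]_m1 -> 'M[C]_n1) (g : 'M[C]_m2 -> 'M[C]_n2)
  (X : 'M[C]_(m1 * m2)) p1 p2 q1 q2 :
  tens_map f g X (mxtens_index (p1, p2)) (mxtens_index (q1, q2)) =
  \sum_i \sum_j \sum_k \sum_l (X (mxtens_index (i, k)) (mxtens_index (j, l)) *
      (f (delta_mx i j) p1 q1 * g (delta_mx k l) p2 q2)).
Proof.
rewrite /tens_map summxE; apply: eq_bigr => i _; rewrite summxE; apply: eq_bigr => j _.
rewrite summxE; apply: eq_bigr => k _; rewrite summxE; apply: eq_bigr => l _.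
by rewrite mxE tensmxE.
Qed.

Lemma tens_idE d m (g : 'M[C]_m -> 'M[C]_m) (X : 'M[C]_(d * m)) p1 p2 q1 q2 :
  tens_map (@id 'M[C]_d) g X (mxtens_index (p1, p2)) (mxtens_index (q1, q2)) =
  \sum_k \sum_l (X (mxtens_index (p1, k)) (mxtens_index (q1, l)) * g (delta_mx k l) p2 q2).
Proof.
rewrite tens_mapE.
transitivity (\sum_i ((p1 == i)%:R * \sum_j ((q1 == j)%:R *
   \sum_k \sum_l (X (mxtens_index (i, k)) (mxtens_index (j, l)) * g (delta_mx k l) p2 q2)))).
  apply: eq_bigr => i _; rewrite [RHS]mulr_sumr; apply: eq_bigr => j _.
  rewrite !mulr_sumr; apply: eq_bigr => k _; rewrite !mulr_sumr; apply: eq_bigr => l _.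
  by rewrite mxE -mulnb natrM /=; ring.
by rewrite sum_delta sum_delta.
Qed.


Definition Mch d (N : 'M[C]_d -> 'M[C]_d) : 'M[C]_(d * d) :=
  \matrix_(y, x) (N (delta_mx (mxtens_unindex x).2 (mxtens_unindex y).2)
                     (mxtens_unindex x).1 (mxtens_unindex y).1 / d%:R).

Lemma MchE d (N : 'M[C]_d -> 'M[C]_d) b l a k :
  Mch N (mxtens_index (b, l)) (mxtens_index (a, k)) = N (delta_mx k l) a b / d%:R.
Proof. by rewrite mxE !mxtens_indexK. Qed.

Definition uc d : C := (sqrtC d%:R)^-1.
Definition uvec d : 'cV[C]_(d * d) := uc d *: me_vec R d.

Lemma uc2 d : (uc d)^* * uc d = d%:R^-1.
Proof.
rewrite /uc geC0_conj; last by rewrite invr_ge0 sqrtC_ge0 ler0n.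
by rewrite -expr2 exprVn sqrtCK.
Qed.

Lemma adj_scale n (c : C) (v : 'cV[C]_n) (M : 'M[C]_n) :
  adjmx (c *: v) *m M *m (c *: v) = (c^* * c) *: (adjmx v *m M *m v).
Proof. by rewrite adjmxZ -scalemxAl -scalemxAl -scalemxAr scalerA. Qed.

Lemma uvec_norm d : (0 < d)%N -> adjmx (uvec d) *m uvec d = 1%:M.
Proof.
move=> d0; rewrite /uvec adjmxZ -scalemxAl -scalemxAr scalerA uc2.
rewrite (mx11_scalar (adjmx _ *m _)) me_norm -scalemx1 scalerA mulVf ?scale1r //.
by rewrite pnatr_eq0 -lt0n.
Qed.

Lemma uvec_phi d : uvec d *m adjmx (uvec d) = phi_me R d.
Proof.
rewrite /uvec adjmxZ -scalemxAl -scalemxAr scalerA mulrC uc2 /phi_me //.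
Qed.

Lemma g_formula d (N : 'M[C]_d -> 'M[C]_d) (rho : 'M[C]_(d * d)) :
  (adjmx (uvec d) *m tens_map (@id 'M[C]_d) N rho *m uvec d) 0 0 = \tr (rho *m Mch N).
Proof.
rewrite /uvec adj_scale mxE uc2 me_quad /mxtrace sum_pair mulr_sumr; apply: eq_bigr => a _.
rewrite mulr_sumr.
transitivity (\sum_b \sum_k \sum_l (d%:R^-1 *
   (rho (mxtens_index (a, k)) (mxtens_index (b, l)) * N (delta_mx k l) a b))).
  apply: eq_bigr => b _; rewrite tens_idE mulr_sumr; apply: eq_bigr => k _.
  by rewrite mulr_sumr.
rewrite exchange_big /=; apply: eq_bigr => k _.
rewrite mxE sum_pair; apply: eq_bigr => b _; apply: eq_bigr => l _.
by rewrite MchE; ring.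
Qed.

End Q3.

Section Q4.
Variable R : realType.
Local Notation C := (R[i]).

Lemma adj_delta n (i : 'I_n) : adjmx (delta_mx i 0 : 'cV[C]_n) = delta_mx 0 i.
Proof. by apply/matrixP => p q; rewrite adjmxE !mxE rmorph_nat andbC. Qed.

Lemma quad_delta n (K : 'M[C]_n) (i j : 'I_n) :
  (adjmx (delta_mx i 0 : 'cV[C]_n) *m K *m (delta_mx j 0 : 'cV[C]_n)) 0 0 = K i j.
Proof. by rewrite adj_delta -rowE -colE !mxE. Qed.

Lemma adj11 (X : 'M[C]_1) : adjmx X 0 0 = (X 0 0)^*.
Proof. by rewrite adjmxE. Qed.

Lemma quad_expand n (K : 'M[C]_n) (v w : 'cV[C]_n) c :
  adjmx (v + c *: w) *m K *m (v + c *: w) =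
    adjmx v *m K *m v + c *: (adjmx v *m K *m w) + c^* *: (adjmx w *m K *m v)
    + (c^* * c) *: (adjmx w *m K *m w).
Proof.
rewrite adjmxD adjmxZ !mulmxDl !mulmxDr -!scalemxAl -!scalemxAr scalerA.
by rewrite !addrA.
Qed.

Lemma entry_add m n (A B : 'M[C]_(m, n)) i j : (A + B) i j = A i j + B i j.
Proof. by rewrite mxE. Qed.
Lemma entry_opp m n (A : 'M[C]_(m, n)) i j : (- A) i j = - A i j.
Proof. by rewrite mxE. Qed.
Lemma entry_scale m n c (A : 'M[C]_(m, n)) i j : (c *: A) i j = c * A i j.
Proof. by rewrite mxE. Qed.

Lemma polar n (K : 'M[C]_n) : (forall v : 'cV[C]_n, (adjmx v *m K *m v) 0 0 = 0) -> K = 0.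
Proof.
move=> hK.
have key : forall i j c, c * K i j + c^* * K j i = 0.
  move=> i j c; have := hK (delta_mx i 0 + c *: delta_mx j 0).
  rewrite quad_expand !entry_add !entry_scale !quad_delta.
  have := hK (delta_mx i 0); rewrite quad_delta => ->.
  have := hK (delta_mx j 0); rewrite quad_delta => ->.
  by rewrite add0r mulr0 addr0.
apply/matrixP => i j; rewrite mxE.
have h1 := key i j 1; rewrite conjC1 !mul1r in h1.
have h2 := key i j 'i; rewrite conjCi mulNr in h2.
have e : K i j = K j i.
  apply/eqP; rewrite -subr_eq0; apply/eqP.
  apply: (mulfI (@neq0Ci C)); rewrite mulr0 mulrBr; exact: h2.
move: h1; rewrite -e => /eqP; rewrite -mulr2n -mulr_natr mulf_eq0 pnatr_eq0 orbF.
by move/eqP.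
Qed.

Lemma quad_herm n (M : 'M[C]_n) : (forall v : 'cV[C]_n, 0 <= (adjmx v *m M *m v) 0 0) ->
  adjmx M = M.
Proof.
move=> hq.
suff : adjmx M - M = 0 by move/eqP; rewrite subr_eq0 => /eqP.
apply: polar => v.
rewrite mulmxBr mulmxBl entry_add entry_opp.
have -> : adjmx v *m adjmx M *m v = adjmx (adjmx v *m M *m v).
  by rewrite !adjmxM adjmxK mulmxA.
by rewrite adj11 geC0_conj ?subrr.
Qed.

Lemma quad_tr n (M : 'M[C]_n) (v : 'cV[C]_n) :
  (adjmx v *m M *m v) 0 0 = \tr (v *m adjmx v *m M).
Proof. by rewrite -[in RHS]mulmxA [RHS]mxtrace_mulC trace_mx11. Qed.

Lemma psd_outer n (c : 'cV[C]_n) : psd (c *m adjmx c).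
Proof.
split; first by rewrite /Defs.hermitian adjmxM adjmxK.
move=> v; have -> : adjmx v *m (c *m adjmx c) *m v = adjmx (adjmx c *m v) *m (adjmx c *m v).
  by rewrite adjmxM adjmxK !mulmxA.
exact: quad_ge0.
Qed.

Definition cpd d (f : 'M[C]_d -> 'M[C]_d) :=
  forall rho : 'M[C]_(d * d), psd rho -> psd (tens_map (@id 'M[C]_d) f rho).

Lemma g_ge0 d (N : 'M[C]_d -> 'M[C]_d) rho : cpd N -> psd rho -> 0 <= \tr (rho *m Mch N).
Proof. by move=> cN prho; rewrite -g_formula; have := (cN _ prho).2 (uvec R d). Qed.

Lemma Mch_psd d (N : 'M[C]_d -> 'M[C]_d) : cpd N -> psd (Mch N).
Proof.
move=> cN.
have hq : forall v : 'cV[C]_(d * d), 0 <= (adjmx v *m Mch N *m v) 0 0.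
  by move=> v; rewrite quad_tr; apply: g_ge0 => //; exact: psd_outer.
by split => //; apply: quad_herm.
Qed.

End Q4.

Section Q5.
Variable R : realType.
Local Notation C := (R[i]).

Lemma tr_bound n (M W : 'M[C]_n) (dl : 'rV[C]_n) i0 rho :
  adjmx W *m W = 1%:M -> W *m adjmx W = 1%:M -> M = W *m diag_mx dl *m adjmx W ->
  (forall i, dl 0 i <= dl 0 i0) -> density rho -> \tr (rho *m M) <= dl 0 i0.
Proof.
move=> h1 h2 ME hmax [prho trho].
have -> : \tr (rho *m M) = \tr (adjmx W *m rho *m W *m diag_mx dl).
  by rewrite ME !mulmxA mxtrace_mulC !mulmxA.
set Q := adjmx W *m rho *m W.
have Qpos i : 0 <= Q i i by rewrite /Q -quad_col; exact: prho.2.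
have Qsum : \sum_i Q i i = 1.
  have -> : \sum_i Q i i = \tr Q by [].
  by rewrite /Q -mulmxA mxtrace_mulC -mulmxA h2 mulmx1.
rewrite mul_mx_diag /mxtrace.
under eq_bigr do rewrite mxE.
apply: (@le_trans _ _ (\sum_i Q i i * dl 0 i0)).
  by apply: ler_sum => i _; apply: ler_wpM2l.
by rewrite -mulr_suml Qsum mul1r.
Qed.

Lemma tr_attain n (M W : 'M[C]_n) (dl : 'rV[C]_n) i0 :
  adjmx W *m W = 1%:M -> M = W *m diag_mx dl *m adjmx W ->
  density (col i0 W *m adjmx (col i0 W)) /\
  \tr (col i0 W *m adjmx (col i0 W) *m M) = dl 0 i0.
Proof.
move=> h1 ME; split; first split.
- exact: psd_outer.
- rewrite mxtrace_mulC trace_mx11.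
  have := quad_col 1%:M W i0; rewrite !mulmx1 h1 => ->.
  by rewrite mxE eqxx.
rewrite -quad_tr quad_col ME !mulmxA h1 mul1mx -mulmxA h1 mulmx1.
by rewrite mxE eqxx mulr1n.
Qed.

Lemma Re_le (x y : C) : x <= y -> complex.Re x <= complex.Re y.
Proof. by rewrite lecE => /andP[]. Qed.

Lemma Oval_eq d (N : 'M[C]_d -> 'M[C]_d) (W : 'M[C]_(d * d)) dl i0 :
  (0 < d)%N -> cpd N -> adjmx W *m W = 1%:M -> W *m adjmx W = 1%:M ->
  Mch N = W *m diag_mx dl *m adjmx W ->
  (forall i, 0 <= dl 0 i) -> (forall i, dl 0 i <= dl 0 i0) ->
  Oval N = complex.Re (sqrtC (dl 0 i0)).
Proof.
move=> d0 cN h1 h2 ME hpos hmax.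
have key : forall rho, density rho ->
    fidelity (tens_map (@id 'M[C]_d) N rho) (phi_me R d) =
    complex.Re (sqrtC (\tr (rho *m Mch N))).
  move=> rho [prho _]; rewrite -uvec_phi fid_pure ?g_formula //; first exact: cN.
  exact: uvec_norm.
have [dr0 tr0] := tr_attain i0 h1 ME.
pose S := (fun r : R => exists rho : 'M[C]_(d * d), density rho /\
         r = fidelity (tens_map (@id 'M[C]_d) N rho) (phi_me R d)).
have -> : Oval N = sup S by [].
have inS : S (complex.Re (sqrtC (dl 0 i0))).
  by exists (col i0 W *m adjmx (col i0 W)); rewrite key // tr0.
have ub : ubound S (complex.Re (sqrtC (dl 0 i0))).
  move=> r [rho [drho ->]]; rewrite key //; apply: Re_le.
  rewrite ler_sqrtC ?nnegrE ?hpos //; last by apply: g_ge0 => //; case: drho.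
  exact: (tr_bound h1 h2 ME).
apply/le_anti/andP; split.
  by apply: ge_sup => //; exists (complex.Re (sqrtC (dl 0 i0))).
by apply: ub_le_sup => //; exists (complex.Re (sqrtC (dl 0 i0))).
Qed.

End Q5.

Section Q6.
Variable R : realType.
Local Notation C := (R[i]).

Lemma tens_delta m1 n1 m2 n2 (f : 'M[C]_m1 -> 'M[C]_n1) (g : 'M[C]_m2 -> 'M[C]_n2)
  k1 k2 l1 l2 :
  tens_map f g (delta_mx (mxtens_index (k1, k2)) (mxtens_index (l1, l2))) =
  f (delta_mx k1 l1) *t g (delta_mx k2 l2).
Proof.
apply/matrixP => x y.
case: (mxtens_indexP x) => p1 p2; case: (mxtens_indexP y) => q1 q2.
rewrite tens_mapE tensmxE.
transitivity (\sum_i ((i == k1)%:R * \sum_j ((j == l1)%:R * \sum_k ((k == k2)%:R *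
   \sum_l ((l == l2)%:R * (f (delta_mx i j) p1 q1 * g (delta_mx k l) p2 q2)))))).
  apply: eq_bigr => i _; rewrite [RHS]mulr_sumr; apply: eq_bigr => j _.
  rewrite !mulr_sumr; apply: eq_bigr => k _; rewrite !mulr_sumr; apply: eq_bigr => l _.
  rewrite mxE !(can_eq (@mxtens_indexK _ _)) !xpair_eqE -!mulnb !natrM /=.
  ring.
by rewrite !sum_deltar.
Qed.

Lemma Mch_prod d1 d2 (N1 : 'M[C]_d1 -> 'M[C]_d1) (N2 : 'M[C]_d2 -> 'M[C]_d2)
  a1 a2 b1 b2 k1 k2 l1 l2 :
  Mch (tens_map N1 N2) (mxtens_index (mxtens_index (b1, b2), mxtens_index (l1, l2)))
     (mxtens_index (mxtens_index (a1, a2), mxtens_index (k1, k2))) =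
  Mch N1 (mxtens_index (b1, l1)) (mxtens_index (a1, k1)) *
  Mch N2 (mxtens_index (b2, l2)) (mxtens_index (a2, k2)).
Proof. by rewrite !MchE tens_delta tensmxE natrM invfM; ring. Qed.

Lemma psd_reindex n m (X : 'M[C]_m) (s : 'I_n -> 'I_m) :
  psd X -> psd (\matrix_(x, y) X (s x) (s y)).
Proof.
move=> [hX qX].
pose P : 'M[C]_(m, n) := \matrix_(a, y) ((a == s y)%:R).
have -> : \matrix_(x, y) X (s x) (s y) = adjmx P *m X *m P.
  apply/matrixP => x y; rewrite !mxE.
  under eq_bigr => b _ do rewrite !mxE.
  transitivity (\sum_b ((b == s y)%:R * X (s x) b)).
    by rewrite sum_deltar.
  apply: eq_bigr => b _; rewrite mulrC; congr (_ * _).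
  transitivity (\sum_a ((a == s x)%:R * X a b)); first by rewrite sum_deltar.
  by apply: eq_bigr => a _; rewrite !mxE rmorph_nat.
split.
  by rewrite /Defs.hermitian !adjmxM adjmxK hX mulmxA.
move=> v; have -> : adjmx v *m (adjmx P *m X *m P) *m v = adjmx (P *m v) *m X *m (P *m v).
  by rewrite adjmxM !mulmxA.
exact: qX.
Qed.


Lemma cpd_prod d1 d2 (N1 : 'M[C]_d1 -> 'M[C]_d1) (N2 : 'M[C]_d2 -> 'M[C]_d2) :
  completely_positive N1 -> completely_positive N2 -> cpd (tens_map N1 N2).
Proof.
move=> c1 c2 rho prho.
pose tA (x : 'I_(((d1 * d2) * d1) * d2)) : 'I_((d1 * d2) * (d1 * d2)) :=
  mxtens_index ((mxtens_unindex (mxtens_unindex x).1).1,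
                mxtens_index ((mxtens_unindex (mxtens_unindex x).1).2, (mxtens_unindex x).2)).
pose rA := \matrix_(x, y) rho (tA x) (tA y).
have pA : psd rA := psd_reindex tA prho.
pose Y := tens_map (@id 'M[C]_((d1 * d2) * d1)) N2 rA.
have pY : psd Y := c2 _ _ pA.
pose tB (x : 'I_(((d1 * d2) * d2) * d1)) : 'I_(((d1 * d2) * d1) * d2) :=
  mxtens_index (mxtens_index ((mxtens_unindex (mxtens_unindex x).1).1, (mxtens_unindex x).2),
                (mxtens_unindex (mxtens_unindex x).1).2).
pose YB := \matrix_(x, y) Y (tB x) (tB y).
have pYB : psd YB := psd_reindex tB pY.
pose Z := tens_map (@id 'M[C]_((d1 * d2) * d2)) N1 YB.
have pZ : psd Z := c1 _ _ pYB.
pose tC (x : 'I_((d1 * d2) * (d1 * d2))) : 'I_(((d1 * d2) * d2) * d1) :=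
  mxtens_index (mxtens_index ((mxtens_unindex x).1, (mxtens_unindex (mxtens_unindex x).2).2),
                (mxtens_unindex (mxtens_unindex x).2).1).
suff -> : tens_map (@id 'M[C]_(d1 * d2)) (tens_map N1 N2) rho =
          \matrix_(x, y) Z (tC x) (tC y) by exact: psd_reindex.
apply/matrixP => x y.
case: (mxtens_indexP x) => i p; case: (mxtens_indexP p) => p1 p2.
case: (mxtens_indexP y) => j q; case: (mxtens_indexP q) => q1 q2.
rewrite mxE /tC !mxtens_indexK /= /Z !tens_idE.
rewrite sum_pair; apply: eq_bigr => k1 _.
transitivity (\sum_k2 \sum_l1 \sum_l2
   (rho (mxtens_index (i, mxtens_index (k1, k2))) (mxtens_index (j, mxtens_index (l1, l2))) *
    (N1 (delta_mx k1 l1) p1 q1 * N2 (delta_mx k2 l2) p2 q2))).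
  apply: eq_bigr => k2 _; rewrite sum_pair; apply: eq_bigr => l1 _; apply: eq_bigr => l2 _.
  by rewrite tens_delta tensmxE.
rewrite exchange_big /=; apply: eq_bigr => l1 _.
rewrite mxE /tB !mxtens_indexK /= /Y tens_idE mulr_suml; apply: eq_bigr => k2 _.
rewrite mulr_suml; apply: eq_bigr => l2 _.
rewrite mxE /tA !mxtens_indexK /=.
ring.
Qed.

End Q6.

Section Q7.
Variable R : realType.
Local Notation C := (R[i]).

Lemma sum_bij n n1 n2 (e : 'I_n -> 'I_n1 * 'I_n2) (f : 'I_n1 * 'I_n2 -> 'I_n) :
  cancel e f -> cancel f e -> forall F : 'I_n1 -> 'I_n2 -> C,
  \sum_x F (e x).1 (e x).2 = \sum_a \sum_b F a b.
Proof.
move=> ef fe F; rewrite pair_big /= (reindex e) //=.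
by exists f => ? _; rewrite ?ef ?fe.
Qed.

Lemma wdw n (W : 'M[C]_n) (dl : 'rV[C]_n) x y :
  (W *m diag_mx dl *m adjmx W) x y = \sum_z W x z * dl 0 z * (W y z)^*.
Proof. by rewrite mul_mx_diag mxE; apply: eq_bigr => z _; rewrite !mxE. Qed.

Lemma prod_decomp n n1 n2 (e : 'I_n -> 'I_n1 * 'I_n2) (f : 'I_n1 * 'I_n2 -> 'I_n)
  (ef : cancel e f) (fe : cancel f e) (M : 'M[C]_n) (M1 W1 : 'M[C]_n1)
  (M2 W2 : 'M[C]_n2) (dl1 : 'rV[C]_n1) (dl2 : 'rV[C]_n2) :
  (forall x y, M x y = M1 (e x).1 (e y).1 * M2 (e x).2 (e y).2) ->
  adjmx W1 *m W1 = 1%:M -> adjmx W2 *m W2 = 1%:M ->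
  M1 = W1 *m diag_mx dl1 *m adjmx W1 -> M2 = W2 *m diag_mx dl2 *m adjmx W2 ->
  adjmx (\matrix_(x, y) (W1 (e x).1 (e y).1 * W2 (e x).2 (e y).2) : 'M[C]_n) *m
        (\matrix_(x, y) (W1 (e x).1 (e y).1 * W2 (e x).2 (e y).2)) = 1%:M /\
  M = (\matrix_(x, y) (W1 (e x).1 (e y).1 * W2 (e x).2 (e y).2) : 'M[C]_n) *m
      diag_mx (\row_y (dl1 0 (e y).1 * dl2 0 (e y).2)) *m
      adjmx (\matrix_(x, y) (W1 (e x).1 (e y).1 * W2 (e x).2 (e y).2) : 'M[C]_n).
Proof.
move=> hM h1 h2 E1 E2; split.
  apply/matrixP => y y'; rewrite mxE.
  transitivity (\sum_x ((W1 (e x).1 (e y).1)^* * W1 (e x).1 (e y').1) *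
                       ((W2 (e x).2 (e y).2)^* * W2 (e x).2 (e y').2)).
    by apply: eq_bigr => x _; rewrite !mxE rmorphM; ring.
  rewrite (sum_bij ef fe (fun a b => ((W1 a (e y).1)^* * W1 a (e y').1) *
                       ((W2 b (e y).2)^* * W2 b (e y').2))).
  transitivity ((adjmx W1 *m W1) (e y).1 (e y').1 * (adjmx W2 *m W2) (e y).2 (e y').2).
    rewrite !mxE mulr_suml; apply: eq_bigr => a _.
    rewrite mulr_sumr; apply: eq_bigr => b _.
    by rewrite !mxE.
  rewrite h1 h2 !mxE -natrM mulnb.
  have -> : (y == y') = (e y == e y') by rewrite (can_eq ef).
  by case: (e y) (e y') => [? ?] [? ?].
apply/matrixP => x y; rewrite hM wdw.
transitivity ((W1 *m diag_mx dl1 *m adjmx W1) (e x).1 (e y).1 *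
              (W2 *m diag_mx dl2 *m adjmx W2) (e x).2 (e y).2).
  by rewrite -E1 -E2.
rewrite !wdw mulr_suml.
have := sum_bij ef fe (fun a b => W1 (e x).1 a * dl1 0 a * (W1 (e y).1 a)^* *
                          (W2 (e x).2 b * dl2 0 b * (W2 (e y).2 b)^*)).
rewrite /= => Hs.
transitivity (\sum_a \sum_b (W1 (e x).1 a * dl1 0 a * (W1 (e y).1 a)^* *
                          (W2 (e x).2 b * dl2 0 b * (W2 (e y).2 b)^*))).
  by apply: eq_bigr => a _; rewrite mulr_sumr.
rewrite -Hs; apply: eq_bigr => z _; rewrite !mxE rmorphM; ring.
Qed.

Lemma exists_max n (F : 'I_n -> C) : (0 < n)%N -> (forall i, 0 <= F i) ->
  exists i0, forall i, F i <= F i0.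
Proof.
case: n F => [//|n] F _ hF.
have [i0 _ hi0] := @arg_maxP _ _ _ ord0 predT (fun i => complex.Re (F i)) isT.
exists i0 => i; rewrite lecE (ger0_Im (hF i)) (ger0_Im (hF i0)) eqxx /=.
exact: hi0.
Qed.

End Q7.

Unset Implicit Arguments.
Set Strict Implicit.
Lemma Re_mul_ge0 (R : realType) (a b : R[i]) : 0 <= a -> 0 <= b ->
  complex.Re (a * b) = complex.Re a * complex.Re b.
Proof.
move=> ha hb; have := ger0_Im ha; have := ger0_Im hb.
case: a ha => a1 a2 _; case: b hb => b1 b2 _ /= -> ->.
by rewrite !mulr0 subr0.
Qed.

Theorem theorem2 (R : realType) (d1 d2 : nat) (hd1 : (0 < d1)%N) (hd2 : (0 < d2)%N)
  (N1 : 'M[R[i]]_d1 -> 'M[R[i]]_d1) (N2 : 'M[R[i]]_d2 -> 'M[R[i]]_d2) :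
  channel N1 -> channel N2 ->
  Oval (tens_map N1 N2) = Oval N1 * Oval N2.
Proof.
move=> [_ [c1 _]] [_ [c2 _]].
have cp1 : cpd N1 := fun rho => c1 d1 rho.
have cp2 : cpd N2 := fun rho => c2 d2 rho.
have [W1 [dl1 [u1 u1' E1 p1]]] := psd_decomp (Mch_psd cp1).
have [W2 [dl2 [u2 u2' E2 p2]]] := psd_decomp (Mch_psd cp2).
have dd1 : (0 < d1 * d1)%N by rewrite muln_gt0 hd1.
have dd2 : (0 < d2 * d2)%N by rewrite muln_gt0 hd2.
have dd : (0 < d1 * d2)%N by rewrite muln_gt0 hd1.
have [i1 m1] := exists_max dd1 p1.
have [i2 m2] := exists_max dd2 p2.
rewrite (Oval_eq hd1 cp1 u1 u1' E1 p1 m1) (Oval_eq hd2 cp2 u2 u2' E2 p2 m2).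
pose e (x : 'I_((d1 * d2) * (d1 * d2))) : 'I_(d1 * d1) * 'I_(d2 * d2) :=
  (mxtens_index ((mxtens_unindex (mxtens_unindex x).1).1, (mxtens_unindex (mxtens_unindex x).2).1),
   mxtens_index ((mxtens_unindex (mxtens_unindex x).1).2, (mxtens_unindex (mxtens_unindex x).2).2)).
pose f (p : 'I_(d1 * d1) * 'I_(d2 * d2)) : 'I_((d1 * d2) * (d1 * d2)) :=
  mxtens_index (mxtens_index ((mxtens_unindex p.1).1, (mxtens_unindex p.2).1),
                mxtens_index ((mxtens_unindex p.1).2, (mxtens_unindex p.2).2)).
have ef : cancel e f.
  move=> x; case: (mxtens_indexP x) => j l.
  case: (mxtens_indexP j) => j1 j2; case: (mxtens_indexP l) => l1 l2.
  by rewrite /e /f !mxtens_indexK.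
have fe : cancel f e.
  move=> [a b]; case: (mxtens_indexP a) => a1 a2; case: (mxtens_indexP b) => b1 b2.
  by rewrite /e /f !mxtens_indexK.
have hM : forall x y, Mch (tens_map N1 N2) x y =
    Mch N1 (e x).1 (e y).1 * Mch N2 (e x).2 (e y).2.
  move=> x y; case: (mxtens_indexP x) => j l.
  case: (mxtens_indexP j) => j1 j2; case: (mxtens_indexP l) => l1 l2.
  case: (mxtens_indexP y) => k m.
  case: (mxtens_indexP k) => k1 k2; case: (mxtens_indexP m) => m1' m2'.
  by rewrite /e !mxtens_indexK /= Mch_prod.
have [uW EM] := prod_decomp ef fe hM u1 u2 E1 E2.
rewrite (@Oval_eq R (d1 * d2) (tens_map N1 N2) _ _ (f (i1, i2)) dd (cpd_prod c1 c2)
   uW (mulmx1C uW) EM).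
- rewrite !mxE fe /= sqrtCM ?nnegrE //.
  by rewrite Re_mul_ge0 // sqrtC_ge0.
- by move=> y; rewrite mxE; apply: mulr_ge0.
- move=> y; rewrite !mxE fe /=; apply: ler_pM => //.
Qed.
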